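(* There is no countable totally ordered group $U$ such that every countable totally ordered group admits an order-embedding into $U$.
   Context: A totally ordered group is a group with a total order $\le$ such that $x\le y$ implies $zx\le zy$ and $xz\le yz$ for all $x,y,z$. An order-embedding is an injective group homomorphism preserving the order. *)

(* Defs.v *)
Record TOGroup := {
  tog_carrier :> Type;
  tog_mul : tog_carrier -> tog_carrier -> tog_carrier;
  tog_one : tog_carrier;
  tog_inv : tog_carrier -> tog_carrier;
  tog_le : tog_carrier -> tog_carrier -> Prop;
  tog_mulA : forall x y z, tog_mul x (tog_mul y z) = tog_mul (tog_mul x y) z;
  tog_mul1g : forall x, tog_mul tog_one x = x;
  tog_mulVg : forall x, tog_mul (tog_inv x) x = tog_one;
  tog_le_refl : forall x, tog_le x x;
  tog_le_antisym : forall x y, tog_le x y -> tog_le y x -> x = y;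
  tog_le_trans : forall x y z, tog_le x y -> tog_le y z -> tog_le x z;
  tog_le_total : forall x y, tog_le x y \/ tog_le y x;
  tog_le_mull : forall x y z, tog_le x y -> tog_le (tog_mul z x) (tog_mul z y);
  tog_le_mulr : forall x y z, tog_le x y -> tog_le (tog_mul x z) (tog_mul y z)
}.

Definition countable_group (G : TOGroup) : Prop :=
  exists f : G -> nat, forall x y, f x = f y -> x = y.

Definition order_embedding (G H : TOGroup) (f : G -> H) : Prop :=
  (forall x y, f x = f y -> x = y) /\
  (forall x y, f (tog_mul G x y) = tog_mul H (f x) (f y)) /\
  (forall x y, tog_le G x y -> tog_le H (f x) (f y)).

(* Main.v *)
Require Import Defs.
From Stdlib Require Import Reals Lra Lia ZArith Cantor ClassicalEpsilon.
Open Scope R_scope.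

Fixpoint iv (u : nat -> R) (n:nat) : R*R :=
 match n with O => (0,1) | S k => let (a,b) := iv u k in
   if Rlt_dec (u k) ((a+b)/2) then (a + 2*(b-a)/3, b) else (a, a+(b-a)/3) end.

Lemma iv_lt u n : fst (iv u n) < snd (iv u n).
Proof.
  induction n as [|n IH]; simpl. lra.
  destruct (iv u n) as [a b]; simpl in *.
  destruct (Rlt_dec (u n) ((a+b)/2)); simpl; lra.
Qed.

Lemma iv_step u n : fst (iv u n) <= fst (iv u (S n)) /\ snd (iv u (S n)) <= snd (iv u n)
  /\ forall x, fst (iv u (S n)) <= x <= snd (iv u (S n)) -> x <> u n.
Proof.
  pose proof (iv_lt u n) as H. simpl.
  destruct (iv u n) as [a b]; simpl in *.
  destruct (Rlt_dec (u n) ((a+b)/2)); simpl; repeat split; try lra;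
  intros x Hx E; subst; lra.
Qed.

Lemma iv_mono u m k : (m <= k)%nat -> fst (iv u m) <= fst (iv u k) /\ snd (iv u k) <= snd (iv u m).
Proof.
  induction 1. lra.
  destruct (iv_step u m0) as [H1 [H2 _]]. lra.
Qed.

Lemma iv_cross u n m : fst (iv u n) <= snd (iv u m).
Proof.
  destruct (iv_mono u n (Nat.max n m)) as [H1 _]. lia.
  destruct (iv_mono u m (Nat.max n m)) as [_ H2]. lia.
  pose proof (iv_lt u (Nat.max n m)). lra.
Qed.

Lemma R_miss (u : nat -> R) : exists l, forall n, l <> u n.
Proof.
  set (E := fun x => exists n, x = fst (iv u n)).
  assert (HB : bound E).
  { exists (snd (iv u 0)). intros x [n ->]. apply iv_cross. }
  destruct (completeness E HB) as [l [Hub Hl]].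
  { exists (fst (iv u 0)). exists 0%nat. reflexivity. }
  exists l. intros n.
  destruct (iv_step u n) as [_ [_ H]]. apply H. split.
  - apply Hub. exists (S n). reflexivity.
  - apply Hl. intros x [k ->]. apply iv_cross.
Qed.

Definition val (al : R) (d : Z*Z) : R := IZR (fst d) + IZR (snd d) * al.
Definition pos (al : R) (d : Z*Z) : Prop :=
  0 < val al d \/ (val al d = 0 /\ (0 <= snd d)%Z).
Definition zle (al : R) (x y : Z*Z) : Prop := pos al (fst y - fst x, snd y - snd x)%Z.
Definition zmul (x y : Z*Z) : Z*Z := (fst x + fst y, snd x + snd y)%Z.
Definition zinv (x : Z*Z) : Z*Z := (- fst x, - snd x)%Z.

Lemma val_eq al a b c d : val al (a,b) = val al (c,d) + val al ((a-c),(b-d))%Z.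
Proof. unfold val; simpl. rewrite !minus_IZR. ring. Qed.

Lemma zle_refl al x : zle al x x.
Proof. right. unfold val. simpl. rewrite !Z.sub_diag. simpl. split; [ring|lia]. Qed.

Lemma zle_antisym al x y : zle al x y -> zle al y x -> x = y.
Proof.
  destruct x as [x1 x2], y as [y1 y2]; unfold zle, pos, val; simpl.
  rewrite !minus_IZR. intros H1 H2.
  assert (E : IZR y1 - IZR x1 + (IZR y2 - IZR x2) * al = 0 /\ (0 <= y2 - x2)%Z /\ (0 <= x2 - y2)%Z)
    by (destruct H1 as [H1|H1]; destruct H2 as [H2|H2]; repeat split; try lra; try lia).
  destruct E as [E [E1 E2]].
  assert (y2 = x2) by lia. subst. 
  assert (IZR y1 = IZR x1) by lra. apply eq_IZR in H. subst. reflexivity.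
Qed.

Lemma zle_trans al x y z : zle al x y -> zle al y z -> zle al x z.
Proof.
  destruct x as [x1 x2], y as [y1 y2], z as [z1 z2]; unfold zle, pos, val; simpl.
  rewrite !minus_IZR. intros [H1|[H1 H1']] [H2|[H2 H2']].
  - left; lra.
  - left; lra.
  - left; lra.
  - right; split; [lra|lia].
Qed.

Lemma zle_total al x y : zle al x y \/ zle al y x.
Proof.
  destruct x as [x1 x2], y as [y1 y2]; unfold zle, pos, val; simpl.
  rewrite !minus_IZR.
  destruct (Rtotal_order (IZR y1 - IZR x1 + (IZR y2 - IZR x2) * al) 0) as [H|[H|H]].
  - right; left; lra.
  - destruct (Z.le_gt_cases 0 (y2 - x2)).
    + left; right; split; [lra|lia].
    + right; right; split; [lra|lia].
  - left; left; lra.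
Qed.

Lemma zle_mull al x y z : zle al x y -> zle al (zmul z x) (zmul z y).
Proof.
  unfold zle, zmul; simpl.
  replace (fst z + fst y - (fst z + fst x))%Z with (fst y - fst x)%Z by lia.
  replace (snd z + snd y - (snd z + snd x))%Z with (snd y - snd x)%Z by lia. auto.
Qed.

Lemma zle_mulr al x y z : zle al x y -> zle al (zmul x z) (zmul y z).
Proof.
  unfold zle, zmul; simpl.
  replace (fst y + fst z - (fst x + fst z))%Z with (fst y - fst x)%Z by lia.
  replace (snd y + snd z - (snd x + snd z))%Z with (snd y - snd x)%Z by lia. auto.
Qed.

Definition Gal (al : R) : TOGroup.
Proof.
  refine (@Build_TOGroup (Z*Z)%type zmul (0,0)%Z zinv (zle al) _ _ _
    (zle_refl al) (zle_antisym al) (zle_trans al) (zle_total al) (zle_mull al) (zle_mulr al)).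
  - intros x y z; unfold zmul; simpl; f_equal; lia.
  - intros [x1 x2]; unfold zmul; simpl; reflexivity.
  - intros [x1 x2]; unfold zmul, zinv; simpl; f_equal; lia.
Defined.

Definition zn (z : Z) : nat := match z with Z0 => O | Zpos p => (2 * Pos.to_nat p)%nat
  | Zneg p => (2 * Pos.to_nat p + 1)%nat end.
Lemma zn_inj a b : zn a = zn b -> a = b.
Proof. destruct a, b; simpl; intros; try lia. Qed.

Lemma Gal_countable al : countable_group (Gal al).
Proof.
  exists (fun x : Z*Z => Cantor.to_nat (zn (fst x), zn (snd x))).
  intros [x1 x2] [y1 y2] H. cbn beta in H.
  apply (f_equal Cantor.of_nat) in H. rewrite !Cantor.cancel_of_to in H.
  inversion H. f_equal; apply zn_inj; assumption.
Qed.

Fixpoint npow (G : TOGroup) (x : G) (n : nat) : G :=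
  match n with O => tog_one G | S k => tog_mul G x (npow G x k) end.

Lemma emb_one G H f : order_embedding G H f -> f (tog_one G) = tog_one H.
Proof.
  intros [_ [Hm _]].
  set (y := f (tog_one G)).
  assert (E : y = tog_mul H y y) by (unfold y; rewrite <- Hm, tog_mul1g; reflexivity).
  transitivity (tog_mul H (tog_mul H (tog_inv H y) y) y).
  - rewrite tog_mulVg, tog_mul1g. reflexivity.
  - rewrite <- tog_mulA, <- E. apply tog_mulVg.
Qed.

Lemma emb_npow G H f x n : order_embedding G H f -> f (npow G x n) = npow H (f x) n.
Proof.
  intros Hf. induction n; simpl. apply emb_one; auto.
  destruct Hf as [_ [Hm _]]. rewrite Hm, IHn. reflexivity.
Qed.

Lemma npow_e1 al n : npow (Gal al) (1,0)%Z n = (Z.of_nat n, 0)%Z.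
Proof. induction n. reflexivity. cbn [npow]. rewrite IHn. change (zmul (1,0)%Z (Z.of_nat n, 0)%Z = (Z.of_nat (S n), 0)%Z). unfold zmul; cbn [fst snd]. rewrite Nat2Z.inj_succ. f_equal; lia. Qed.
Lemma npow_e2 al n : npow (Gal al) (0,1)%Z n = (0, Z.of_nat n)%Z.
Proof. induction n. reflexivity. cbn [npow]. rewrite IHn. change (zmul (0,1)%Z (0, Z.of_nat n)%Z = (0, Z.of_nat (S n))%Z). unfold zmul; cbn [fst snd]. rewrite Nat2Z.inj_succ. f_equal; lia. Qed.

Lemma pair_decomp al a b : ((Z.of_nat a, Z.of_nat b)%Z : Gal al) =
  tog_mul (Gal al) (npow (Gal al) (1,0)%Z a) (npow (Gal al) (0,1)%Z b).
Proof. rewrite npow_e1, npow_e2. simpl. unfold zmul; simpl. f_equal; lia. Qed.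

Definition Pemb (U : TOGroup) (al : R) (u v : U) : Prop :=
  exists f : Gal al -> U, order_embedding (Gal al) U f /\ f (1,0)%Z = u /\ f (0,1)%Z = v.

Lemma image_of (U : TOGroup) al (f : Gal al -> U) a b : order_embedding (Gal al) U f ->
  f (Z.of_nat a, Z.of_nat b)%Z = tog_mul U (npow U (f (1,0)%Z) a) (npow U (f (0,1)%Z) b).
Proof.
  intros Hf. rewrite (pair_decomp al a b). pose proof Hf as [H1 [H2 H3]].
  rewrite H2, !emb_npow by exact Hf. reflexivity.
Qed.

Lemma sep_lt (U : TOGroup) al be (u v : U) : al < be -> Pemb U al u v -> Pemb U be u v -> False.
Proof.
  intros Hlt [f [Hf [Hu Hv]]] [g [Hg [Gu Gv]]].
  (* find q, m with q*al < m < q*be *)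
  destruct (archimed (/ (be - al))) as [Hq1 _].
  set (N := up (/ (be - al))) in *.
  assert (HNpos : (0 < N)%Z).
  { apply lt_IZR. assert (0 < / (be - al)) by (apply Rinv_0_lt_compat; lra). simpl; lra. }
  set (q := Z.to_nat N).
  assert (Hq : INR q = IZR N) by (unfold q; rewrite INR_IZR_INZ, Z2Nat.id; [reflexivity|lia]).
  assert (Hqd : INR q * (be - al) > 1).
  { rewrite Hq. apply Rmult_lt_reg_r with (/ (be - al)).
    apply Rinv_0_lt_compat; lra.
    rewrite Rmult_assoc, Rinv_r by lra.
    assert (0 < / (be - al)) by (apply Rinv_0_lt_compat; lra). nra. }
  destruct (archimed (INR q * al)) as [Hm1 Hm2].
  set (m := up (INR q * al)) in *.
  set (m1 := Z.to_nat m). set (m2 := Z.to_nat (- m)).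
  assert (Hm : (Z.of_nat m1 - Z.of_nat m2 = m)%Z) by (unfold m1, m2; lia).
  set (x := (Z.of_nat m2, Z.of_nat q)%Z). set (y := (Z.of_nat m1, Z.of_nat 0)%Z).
  assert (A1 : zle al x y).
  { unfold zle, pos, val, x, y; simpl. left.
    rewrite !minus_IZR, <- !INR_IZR_INZ. simpl.
    assert (IZR m = INR m1 - INR m2) by (rewrite <- Hm, minus_IZR, <- !INR_IZR_INZ; reflexivity).
    rewrite ?opp_IZR, <- ?INR_IZR_INZ in *. lra. }
  assert (A2 : ~ zle al y x).
  { unfold zle, pos, val, x, y; simpl.
    rewrite !minus_IZR, <- !INR_IZR_INZ. simpl.
    assert (IZR m = INR m1 - INR m2) by (rewrite <- Hm, minus_IZR, <- !INR_IZR_INZ; reflexivity).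
    rewrite ?opp_IZR, <- ?INR_IZR_INZ in *. lra. }
  assert (A3 : zle be y x).
  { unfold zle, pos, val, x, y; simpl. left.
    rewrite !minus_IZR, <- !INR_IZR_INZ. simpl.
    assert (IZR m = INR m1 - INR m2) by (rewrite <- Hm, minus_IZR, <- !INR_IZR_INZ; reflexivity).
    rewrite ?opp_IZR, <- ?INR_IZR_INZ in *. lra. }
  pose proof Hf as [Hfi [_ Hfm]]. pose proof Hg as [_ [_ Hgm]].
  pose proof (Hfm x y A1) as B1. pose proof (Hgm y x A3) as B2.
  unfold x, y in B1, B2.
  rewrite !(image_of U al f) in B1 by exact Hf.
  rewrite !(image_of U be g) in B2 by exact Hg.
  rewrite Hu, Hv in B1. rewrite Gu, Gv in B2.
  pose proof (tog_le_antisym U _ _ B1 B2) as B.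
  rewrite <- Hu, <- Hv in B. rewrite <- !(image_of U al f) in B by exact Hf.
  apply Hfi in B. apply A2. fold x y in B. rewrite B. apply zle_refl.
Qed.

Theorem mainTheorem3 :
  ~ (exists U : TOGroup, countable_group U /\
       forall G : TOGroup, countable_group G ->
         exists f : G -> U, order_embedding G U f).
Proof.
  intros [U [[c Hc] HU]].
  set (h := fun n : nat => epsilon (inhabits 0) (fun al => exists u v : U,
      Cantor.to_nat (c u, c v) = n /\ Pemb U al u v)).
  destruct (R_miss h) as [l Hl].
  destruct (HU (Gal l) (Gal_countable l)) as [f Hf].
  set (n := Cantor.to_nat (c (f (1,0)%Z), c (f (0,1)%Z))).
  assert (HP : exists u v : U, Cantor.to_nat (c u, c v) = n /\ Pemb U (h n) u v).
  { apply (epsilon_spec (inhabits 0) (fun al => exists u v : U,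
      Cantor.to_nat (c u, c v) = n /\ Pemb U al u v)).
    exists l, (f (1,0)%Z), (f (0,1)%Z). split; [reflexivity|]. exists f; auto. }
  destruct HP as [u [v [En Hp]]].
  unfold n in En. apply (f_equal Cantor.of_nat) in En. rewrite !Cantor.cancel_of_to in En.
  inversion En as [[E1 E2]]. apply Hc in E1. apply Hc in E2. subst u v.
  assert (Hl' : Pemb U l (f (1,0)%Z) (f (0,1)%Z)) by (exists f; auto).
  apply (Hl n).
  destruct (Rtotal_order l (h n)) as [L|[L|L]].
  - exfalso; exact (sep_lt U _ _ _ _ L Hl' Hp).
  - exact L.
  - exfalso; exact (sep_lt U _ _ _ _ L Hp Hl').
Qed.
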